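(* For every nonnegative integer $n$, $$E(n,n,n)=\sum_{k=0}^n\binom{n}{k}^3=\sum_{k=\lceil n/2\rceil}^{n}\binom{n}{k}^2\binom{2k}{n} =\frac{1}{2^n}\sum_{k=\lceil n/2\rceil}^{n}\binom{2k}{n}\binom{2k}{k}\binom{2n-2k}{n-k}$$ $$=\sum_{k=0}^{n}\binom{n+2k}{3k}\binom{2k}{k}\binom{3k}{k}(-4)^{n-k} =\sum_{k=0}^{\lfloor n/2\rfloor}\binom{n+k}{3k}\binom{2k}{k}\binom{3k}{k}2^{n-2k}.$$
   Context: For nonnegative integers $n_1,\dots,n_S$, $E(n_1,\dots,n_S)$ denotes the number of block derangements: $S$ players hold $n_1,\dots,n_S$ distinct cards respectively; all $N=n_1+\dots+n_S$ cards are redealt so that player $j$ again receives exactly $n_j$ cards (only which cards each player gets matters); $E$ counts the deals in which no player receives any card he originally held. Equivalently, $E(n_1,\dots,n_S)$ is the coefficient of $x_1^{n_1}\cdots x_S^{n_S}$ in $\prod_{j=1}^S(x_1+\dots+x_S-x_j)^{n_j}$. By convention $E(0,\dots,0)=1$. *)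

(* Defs.v *)
From HB Require Import structures.
From mathcomp Require Import all_boot all_order all_algebra.
Set Implicit Arguments. Unset Strict Implicit. Unset Printing Implicit Defensive.

(* Cards: player j holds the cards (j, 0), ..., (j, ns j - 1). *)
Definition card_t (S : nat) (ns : 'I_S -> nat) : finType :=
  {j : 'I_S & 'I_(ns j)}.

Definition block_derangement (S : nat) (ns : 'I_S -> nat)
    (f : {ffun card_t ns -> 'I_S}) : bool :=
  [forall j : 'I_S, #|[set c : card_t ns | f c == j]| == ns j] &&
  [forall c : card_t ns, f c != tag c].

Definition E (S : nat) (ns : 'I_S -> nat) : nat :=
  #|[set f : {ffun card_t ns -> 'I_S} | block_derangement f]|.

Definition E3 (n : nat) : nat := E (fun _ : 'I_3 => n).

(* Main.v *)
Require Import Defs.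
From HB Require Import structures.
From mathcomp Require Import all_boot all_order all_algebra.
From mathcomp Require Import ring lra zify.
Import GRing.Theory Num.Theory.

Module Dev.
Import Order.TTheory.
Local Open Scope ring_scope.

Ltac nzt := repeat (apply/andP; split); first [assumption | apply/negP; move/eqP; lra].

Lemma L1 (N K : nat) : ('C(N, K.+1)%:R : rat) = 'C(N,K)%:R * (N%:R - K%:R) / (K.+1)%:R.
Proof.
have h := mul_bin_left N K.
apply: (@mulIf _ (K.+1)%:R); first by rewrite pnatr_eq0.
rewrite mulfVK ?pnatr_eq0 // mulrC -natrM h.
case: (leqP K N) => hk.
  by rewrite natrM natrB // mulrC.
by rewrite bin_small // !muln0 mul0r.
Qed.

Lemma L2 (N K : nat) : ('C(N, K)%:R : rat) = 'C(N.+1,K)%:R * (N.+1%:R - K%:R) / (N.+1)%:R.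
Proof.
have h := mul_bin_down N.+1 K.
apply: (@mulIf _ (N.+1)%:R); first by rewrite pnatr_eq0.
rewrite mulfVK ?pnatr_eq0 // mulrC -natrM h /=.
case: (leqP K N.+1) => hk.
  by rewrite natrM natrB // mulrC.
by rewrite bin_small // ?muln0 ?mul0n ?mulr0 ?mul0r.
Qed.

Lemma L3 (N K : nat) : ('C(N, K)%:R : rat) = 'C(N.+1,K.+1)%:R * (K.+1)%:R / (N.+1)%:R.
Proof.
have h := mul_bin_diag N.+1 K.
apply: (@mulIf _ (N.+1)%:R); first by rewrite pnatr_eq0.
rewrite mulfVK ?pnatr_eq0 // -!natrM; congr (_%:R).
by rewrite mulnC h mulnC.
Qed.

Definition c0 (n : nat) : rat := -8 * (n.+1)%:R^+2.
Definition c1 (n : nat) : rat := - (7 * n%:R^+2 + 21 * n%:R + 16).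
Definition c2 (n : nat) : rat := (n.+2)%:R^+2.

Definition S (F : nat -> nat -> rat) (n : nat) : rat := \sum_(0 <= k < n.+1) F n k.

Lemma S_ext (F : nat -> nat -> rat) n m : (n < m)%N -> (forall k, (n < k)%N -> F n k = 0) ->
  \sum_(0 <= k < m) F n k = S F n.
Proof.
move=> hnm hF; rewrite /S (big_cat_nat (n := n.+1)) //= [X in _ + X]big1_seq ?addr0 //.
by move=> k /andP[_]; rewrite mem_index_iota => /andP [h _]; apply: hF.
Qed.

Lemma rec_of (F G : nat -> nat -> rat) :
 (forall n k, (n < k)%N -> F n k = 0) ->
 (forall n k, c0 n * F n k + c1 n * F n.+1 k + c2 n * F n.+2 k = G n k.+1 - G n k) ->
 (forall n, G n 0 = 0) -> (forall n, G n n.+3 = 0) ->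
 forall n, c0 n * S F n + c1 n * S F n.+1 + c2 n * S F n.+2 = 0.
Proof.
move=> hF hR hG0 hG3 n.
have hE : forall j, (j < n.+3)%N -> S F j = \sum_(0<=k<n.+3) F j k.
  by move=> j hj; rewrite S_ext // => k; apply: hF.
rewrite (hE n); last lia. rewrite (hE n.+1); last lia. rewrite (hE n.+2); last lia.
rewrite !mulr_sumr -!big_split /=.
rewrite (@telescope_sumr_eq _ _ _ (G n)) ?hG0 ?hG3 ?subr0 // => k _.

Qed.

Definition isrec (u : nat -> rat) := forall n, c0 n * u n + c1 n * u n.+1 + c2 n * u n.+2 = 0.

Lemma rec_uniq (u v : nat -> rat) : u 0 = v 0 -> u 1 = v 1 -> isrec u -> isrec v -> forall n, u n = v n.
Proof.
move=> h0 h1 hu hv n.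
suff: u n = v n /\ u n.+1 = v n.+1 by case.
elim: n => [|n [IH1 IH2]]; first by split.
split => //.
have hc : c2 n != 0 by rewrite /c2 expf_eq0 pnatr_eq0.
apply: (mulfI hc).
have := hu n; have := hv n; rewrite IH1 IH2 => e1 e2.
apply: (@addrI _ (c0 n * v n + c1 n * v n.+1)).
by rewrite e2 e1.
Qed.

Definition Fa (n k : nat) : rat := ('C(n,k) ^ 3)%:R.
Definition Pa (n k : nat) : rat :=
  let N := n%:R in let K := k%:R in
  -72 + 78*K - 30*K^+2 + 4*K^+3 + N*(-272 + 249*K - 78*K^+2 + 8*K^+3)
  + N^+2*(-402 + 291*K - 66*K^+2 + 4*K^+3) + N^+3*(-290+147*K-18*K^+2)
  + N^+4*(-102+27*K) - 14*N^+5.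
Definition Ga (n k : nat) : rat :=
  k%:R^+3 * Pa n k * ('C(n.+2,k)^3)%:R / ((n.+1)%:R^+3 * (n.+2)%:R^+3).

Lemma recA : isrec (S Fa).
Proof.
apply: (@rec_of Fa Ga).
- by move=> n k h; rewrite /Fa bin_small.
- move=> n k.
  rewrite /Fa /Ga /Pa /c0 /c1 /c2 !natrX.
  rewrite (L2 n k) (L2 n.+1 k) (L1 n.+2 k).
  set x := ('C(n.+2,k))%:R.
  have hn : (0:rat) <= n%:R := ler0n _ _.
  have hk : (0:rat) <= k%:R := ler0n _ _.
  field; nzt.
- by move=> n; rewrite /Ga expr0n /= !mul0r.
- by move=> n; rewrite /Ga bin_small // !mulr0 mul0r.
Qed.

Lemma Sa n : S Fa n = (\sum_(0 <= k < n.+1) 'C(n, k) ^ 3)%N%:R.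
Proof. by rewrite /S natr_sum. Qed.

Lemma Fa01 : S Fa 0 = 1 /\ S Fa 1 = 2.
Proof. by rewrite /S /Fa !big_nat_recr //= !big_nil. Qed.

Definition Fb (n k : nat) : rat := ('C(n,k) ^ 2 * 'C(k.*2, n))%:R.
Definition Pb (n k : nat) : rat :=
  let N := n%:R in let K := k%:R in
  12*K - 28*K^+2 + 8*K^+3 + N*(-6 + 44*K - 48*K^+2 + 8*K^+3)
  + N^+2*(-15 + 46*K - 20*K^+2) + N^+3*(-12+14*K) - 3*N^+4.
Definition Gb (n k : nat) : rat :=
  k%:R^+2 * Pb n k * ('C(n.+2,k)^2 * 'C(k.*2, n))%:R / ((n.+1)%:R^+2 * (n.+2)%:R^+2).

Lemma recB : isrec (S Fb).
Proof.
apply: (@rec_of Fb Gb).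
- by move=> n k h; rewrite /Fb bin_small // expr0n /= mul0n.
- move=> n k.
  rewrite /Fb /Gb /Pb /c0 /c1 /c2 !natrM doubleS.
  rewrite (L2 n k) (L2 n.+1 k) (L1 n.+2 k).
  rewrite (L1 k.*2 n.+1) (L1 k.*2 n) (L2 k.*2 n) (L2 k.*2.+1 n).
  rewrite -!mul2n.
  set x := ('C(n.+2,k))%:R.
  set y := ('C((2*k).+2,n))%:R.
  have hn : (0:rat) <= n%:R := ler0n _ _.
  have hk : (0:rat) <= k%:R := ler0n _ _.
  field; nzt.
- by move=> n; rewrite /Gb expr0n /= !mul0r.
- by move=> n; rewrite /Gb bin_small // !mul0n !mulr0 mul0r.
Qed.

Lemma Fb01 : S Fb 0 = 1 /\ S Fb 1 = 2.
Proof. by rewrite /S /Fb !big_nat_recr //= !big_nil. Qed.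

Definition Fc (n k : nat) : rat :=
  if (k <= n)%N then ('C(k.*2, n) * 'C(k.*2,k) * 'C((n - k).*2, n - k))%:R / (2%:R)^+n else 0.
Definition Pc (n k : nat) : rat :=
  let N := n%:R in let K := k%:R in
  -28 + 24*K - 4*K^+2 + N*(-48 + 26*K - 2*K^+2) + N^+2*(-27 + 7*K) - 5*N^+3.
Definition Gc (n k : nat) : rat :=
  Pc n k * Fc n.+2 k / ((n.*2).+3%:R - (k.*2)%:R).

Lemma recC : isrec (S Fc).
Proof.
apply: (@rec_of Fc Gc).
- by move=> n k h; rewrite /Fc ifF //; lia.
- move=> n k.
  have hn : (0:rat) <= n%:R := ler0n _ _.
  have hk : (0:rat) <= k%:R := ler0n _ _.
  rewrite /Gc /Pc /Fc /c0 /c1 /c2.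
  case: (leqP k n) => [hkn | hnk].
    have [p ->] : exists p, n = (k + p)%N by exists (n - k)%N; lia.
    have hp : (0:rat) <= p%:R := ler0n _ _.
    rewrite !ifT; try lia.
    have -> : (k + p - k = p)%N by lia.
    have -> : ((k + p).+1 - k = p.+1)%N by lia.
    have -> : ((k + p).+2 - k = p.+2)%N by lia.
    have -> : ((k + p).+2 - k.+1 = p.+1)%N by lia.
    rewrite !natrM !doubleS.
    set A := k.*2. set B := (k + p)%N.
    rewrite (L3 A B) (L3 A B.+1) (L2 A B.+2) (L3 A.+1 B.+1) (L2 A.+1 B.+2).
    rewrite (L3 A k) (L2 A.+1 k.+1).
    rewrite (L3 (p.*2) p) (L2 (p.*2.+1) p.+1) (L3 (p.*2.+2) p.+1) (L2 (p.*2.+3) p.+2).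
    set x := 'C(A.+2, B.+2)%:R. set y := 'C(A.+2, k.+1)%:R. set z := 'C(p.*2.+4, p.+2)%:R.
    rewrite !exprS.
    set t := (2%:R)^+B.
    have ht : t != 0 by rewrite expf_neq0 // pnatr_eq0.
    rewrite /A /B -!mul2n.
    field; nzt.
  case: (ltngtP k n.+2) => hk2.
  - have -> : k = n.+1 by lia.
    rewrite !ifT; try lia.
    rewrite !subnn !subSnn /= bin0 bin1 !natrM !doubleS.
    rewrite (L1 (n.*2.+2) n.+1) (L3 (n.*2.+2) n.+1) (L2 (n.*2.+3) n.+2).
    set x := 'C(n.*2.+4, n.+2)%:R.
    rewrite !exprS.
    set t := (2%:R)^+n.
    have ht : t != 0 by rewrite expf_neq0 // pnatr_eq0.
    rewrite -!mul2n.
    field; nzt.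
  - rewrite ifF; last lia.
    by rewrite !(mulr0, mul0r, subrr, addr0).
  - subst k.
    rewrite ifF; last lia.
    rewrite !subnn /= bin0 !natrM.
    set x := 'C(n.+2.*2, n.+2)%:R.
    rewrite !exprS.
    set t := (2%:R)^+n.
    have ht : t != 0 by rewrite expf_neq0 // pnatr_eq0.
    rewrite -!mul2n.
    field; nzt.
- by move=> n; rewrite /Gc /Fc /= bin0n !mul0n !mul0r !mulr0 !mul0r.
- by move=> n; rewrite /Gc /Fc ifF ?mulr0 ?mul0r //; lia.
Qed.

Lemma Fc01 : S Fc 0 = 1 /\ S Fc 1 = 2.
Proof. rewrite /S /Fc !big_nat_recr //= !big_nil; split; by vm_compute. Qed.

Definition Fd (n k : nat) : rat :=
  ('C(n + k.*2, 3*k) * 'C(k.*2,k) * 'C(3*k,k))%:R * (- 4%:R)^+n * ((- 4%:R)^-1)^+k.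
Definition Gd (n k : nat) : rat :=
  - (15 + 9 * n%:R) * k%:R^+3 * Fd n.+2 k / (((n + k.*2).+1)%:R * ((n + k.*2).+2)%:R).

Lemma recD : isrec (S Fd).
Proof.
apply: (@rec_of Fd Gd).
- by move=> n k h; rewrite /Fd (bin_small (n := n + k.*2)) ?mul0n ?mul0r //; lia.
- move=> n k.
  rewrite /Gd /Fd /c0 /c1 /c2 !natrM doubleS !addSn !addnS mulnS add3n.
  set M := n + k.*2. set T := 3 * k.
  rewrite (L3 M T) (L3 M.+1 T) (L3 M.+2 T) (L3 M.+1 T.+1) (L3 M.+2 T.+1) (L3 M.+3 T.+1).
  rewrite (L2 M.+2 T.+2) (L2 M.+3 T.+2) (L1 M.+4 T.+2).
  rewrite (L3 (k.*2) k) (L2 (k.*2.+1) k.+1).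
  rewrite (L3 T k) (L2 T.+1 k.+1) (L2 T.+2 k.+1).
  set x := 'C(M.+4, T.+2)%:R. set y := 'C(k.*2.+2, k.+1)%:R. set z := 'C(T.+3, k.+1)%:R.
  rewrite !exprS.
  set p := (- 4%:R)^+n. set q := ((- 4%:R)^-1)^+k.
  rewrite /M /T -!mul2n.
  have hn : (0:rat) <= n%:R := ler0n _ _.
  have hk : (0:rat) <= k%:R := ler0n _ _.
  field; nzt.
- by move=> n; rewrite /Gd expr0n /= !mulr0 !mul0r.
- move=> n; rewrite /Gd /Fd (bin_small (n := n.+2 + n.+3.*2)) ?mul0n ?mul0r ?mulr0 ?mul0r //; lia.
Qed.

Lemma Fd01 : S Fd 0 = 1 /\ S Fd 1 = 2.
Proof.
rewrite /S /Fd !big_nat_recr //= !big_nil.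
split; first by rewrite !expr0 !mulr1 add0r.
by vm_compute.
Qed.

Definition Fe (n k : nat) : rat :=
  ('C(n + k, 3*k) * 'C(k.*2,k) * 'C(3*k,k))%:R * (2%:R)^+n * ((4%:R)^-1)^+k.
Definition Ge (n k : nat) : rat :=
  - (24 + 18 * n%:R) * k%:R^+3 * Fe n.+2 k / (((n + k).+1)%:R * ((n + k).+2)%:R).

Lemma recE : isrec (S Fe).
Proof.
apply: (@rec_of Fe Ge).
- by move=> n k h; rewrite /Fe (bin_small (n := n + k)) ?mul0n ?mul0r //; lia.
- move=> n k.
  rewrite /Ge /Fe /c0 /c1 /c2 !natrM doubleS !addSn !addnS mulnS add3n.
  set M := n + k. set T := 3 * k.
  rewrite (L3 M T) (L3 M.+1 T) (L3 M.+2 T) (L2 M.+1 T.+1) (L2 M.+2 T.+1).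
  rewrite (L1 M.+3 T.+2) (L1 M.+3 T.+1).
  rewrite (L3 (k.*2) k) (L2 (k.*2.+1) k.+1).
  rewrite (L3 T k) (L2 T.+1 k.+1) (L2 T.+2 k.+1).
  set x := 'C(M.+3, T.+1)%:R. set y := 'C(k.*2.+2, k.+1)%:R. set z := 'C(T.+3, k.+1)%:R.
  rewrite !exprS.
  set p := (2%:R)^+n. set q := ((4%:R)^-1)^+k.
  rewrite /M /T -!mul2n.
  have hn : (0:rat) <= n%:R := ler0n _ _.
  have hk : (0:rat) <= k%:R := ler0n _ _.
  field; nzt.
- by move=> n; rewrite /Ge expr0n /= !mulr0 !mul0r.
- move=> n; rewrite /Ge /Fe (bin_small (n := n.+2 + n.+3)) ?mul0n ?mul0r ?mulr0 ?mul0r //; lia.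
Qed.

Lemma Fe01 : S Fe 0 = 1 /\ S Fe 1 = 2.
Proof. rewrite /S /Fe !big_nat_recr //= !big_nil; split; by vm_compute. Qed.

Lemma sumB n : ((\sum_(uphalf n <= k < n.+1) 'C(n, k) ^ 2 * 'C(k.*2, n))%N%:R : rat) = S Fb n.
Proof.
rewrite /S /Fb -natr_sum; congr (_%:R).
rewrite (big_cat_nat (m := 0) (n := uphalf n) (p := n.+1)) //=; last first.
  by rewrite leq_uphalf_double; lia.
rewrite [X in (X + _)%N]big1_seq ?add0n // => k /andP[_]; rewrite mem_index_iota => /andP[_ h].
by rewrite (bin_small (n := k.*2)) ?muln0 // -gtn_uphalf_double.
Qed.

Lemma sum_lower (f : nat -> nat) a b : (a <= b)%N -> (forall k, (k < a)%N -> f k = 0%N) ->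
  (\sum_(a <= k < b) f k = \sum_(0 <= k < b) f k)%N.
Proof.
move=> hab hf; rewrite (big_cat_nat (m := 0) (n := a) (p := b)) //.
by rewrite [in RHS]big1_seq // => k /andP[_]; rewrite mem_index_iota => /andP[_ h]; apply: hf.
Qed.

Lemma sumC n : ((2%:R ^+ n)^-1 *
          (\sum_(uphalf n <= k < n.+1)
              'C(k.*2, n) * 'C(k.*2, k) * 'C(n.*2 - k.*2, n - k))%N%:R : rat) = S Fc n.
Proof.
rewrite sum_lower; last first.
- by move=> k h; rewrite (bin_small (n := k.*2)) ?mul0n // -gtn_uphalf_double.
- by rewrite leq_uphalf_double; lia.
rewrite /S natr_sum mulr_sumr; apply: eq_big_nat => k /andP[_ hk].
rewrite /Fc ifT; last by lia.
by rewrite doubleB mulrC.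
Qed.

Lemma sumD n : (\sum_(0 <= k < n.+1)
            ('C(n + k.*2, 3 * k) * 'C(k.*2, k) * 'C(3 * k, k))%N%:R
              * (- 4%:R) ^+ (n - k) : rat) = S Fd n.
Proof.
rewrite /S; apply: eq_big_nat => k /andP[_ hk].
rewrite /Fd -mulrA; congr (_ * _).
rewrite exprVn -{2}(subnK (_ : (k <= n)%N)); last by lia.
rewrite exprD mulfK // expf_neq0 // oppr_eq0 pnatr_eq0 //.
Qed.

Lemma sumE n : ((\sum_(0 <= k < n./2.+1)
            'C(n + k, 3 * k) * 'C(k.*2, k) * 'C(3 * k, k) * 2 ^ (n - k.*2))%N%:R : rat)
   = S Fe n.
Proof.
rewrite /S natr_sum (big_cat_nat (n := n./2.+1) (p := n.+1)) //=; last first.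
  by rewrite ltnS leq_half_double; lia.
rewrite [X in _ + X]big1_seq ?addr0; last first.
  move=> k /andP[_]; rewrite mem_index_iota => /andP[h _].
  move: h; rewrite ltn_half_double => h.
  by rewrite /Fe (bin_small (n := n + k)) ?mul0n ?mul0r //; lia.
apply: eq_big_nat => k /andP[_ hk].
have hk2 : (k.*2 <= n)%N by move: hk; rewrite ltnS geq_half_double.
rewrite /Fe natrM -!mulrA; congr (_ * _).
rewrite natrX -{2}(subnK hk2) exprD -mul2n exprM (_ : 2%:R ^+ 2 = 4%:R :> rat); last first.
  by rewrite expr2 -natrM.
by rewrite exprVn mulfK // expf_neq0 // pnatr_eq0.
Qed.

Local Close Scope ring_scope.
Section Comb.
Variable n : nat.

Definition ns3 : 'I_3 -> nat := fun _ => n.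
Definition i0 : 'I_3 := @Ordinal 3 0 isT.
Definition i1 : 'I_3 := @Ordinal 3 1 isT.
Definition i2 : 'I_3 := @Ordinal 3 2 isT.

Lemma I3_cases (j : 'I_3) : [\/ j = i0, j = i1 | j = i2].
Proof.
case: j => [[|[|[|m]]] hm].
- by apply: Or31; apply: val_inj.
- by apply: Or32; apply: val_inj.
- by apply: Or33; apply: val_inj.
- by [].
Qed.

Lemma sum_I3 (h : 'I_3 -> nat) : \sum_(j : 'I_3) h j = h i0 + h i1 + h i2.
Proof.
rewrite !big_ord_recl big_ord0 addn0 addnA.
by congr (h _ + h _ + h _); apply: val_inj.
Qed.

Lemma forall_I3 (P : 'I_3 -> bool) : [forall j, P j] = [&& P i0, P i1 & P i2].
Proof.
apply/forallP/and3P => [h | [h0 h1 h2] j]; first by split; apply: h.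
by case: (I3_cases j) => ->.
Qed.

Definition T3 := ({set 'I_n} * {set 'I_n} * {set 'I_n})%type.

Definition nx (A : T3) (j : 'I_3) (x : 'I_n) : 'I_3 :=
  match val j with
  | 0 => if x \in A.1.1 then i1 else i2
  | 1 => if x \in A.1.2 then i2 else i0
  | _ => if x \in A.2 then i0 else i1
  end.

Definition g (A : T3) : {ffun card_t ns3 -> 'I_3} := [ffun c => nx A (tag c) (tagged c)].

Definition mk (j : 'I_3) (x : 'I_n) : card_t ns3 :=
  @Tagged 'I_3 j (fun j => 'I_(ns3 j)) x.

Lemma card_split (P : 'I_3 -> 'I_n -> bool) :
  #|[set c : card_t ns3 | P (tag c) (tagged c)]| = \sum_(j : 'I_3) #|[set x | P j x]|.
Proof.
transitivity (\sum_(c : card_t ns3 | P (tag c) (tagged c)) 1); first by rewrite sum1dep_card.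
transitivity (\sum_(j : 'I_3) \sum_(x : 'I_n | P j x) 1); last by apply: eq_bigr => j _; rewrite sum1dep_card.
rewrite (@sig_big_dep _ _ _ _ (fun j : 'I_3 => 'I_(ns3 j)) predT (fun j x => P j x) (fun _ _ => 1)).
by apply: eq_bigl => c.
Qed.


Lemma card_if (B : {set 'I_n}) (a b c : 'I_3) :
  #|[set x | (if x \in B then a else b) == c]| =
  (a == c) * #|B| + (b == c) * (n - #|B|).
Proof.
have hC : #|~: B| = n - #|B| by rewrite cardsCs setCK card_ord.
have hB := max_card B; rewrite card_ord in hB.
case: (a =P c) => [-> | na]; case: (b =P c) => [-> | nb] /=;
  try (have nac : (a == c) = false by apply/negbTE/eqP);
  try (have nbc : (b == c) = false by apply/negbTE/eqP).
- rewrite (_ : [set x | _] = setT); last first.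
    by apply/setP => x; rewrite !inE; case: (x \in B); rewrite ?eqxx.
  by rewrite cardsT card_ord !mul1n subnKC.
- rewrite (_ : [set x | _] = B); first by rewrite mul1n mul0n addn0.
  by apply/setP => x; rewrite !inE; case: (x \in B); rewrite ?eqxx ?nac ?nbc.
- rewrite (_ : [set x | _] = ~: B); first by rewrite hC mul0n mul1n.
  by apply/setP => x; rewrite !inE; case: (x \in B); rewrite ?eqxx ?nac ?nbc.
- rewrite (_ : [set x | _] = set0) ?cards0 //.
  by apply/setP => x; rewrite !inE; case: (x \in B); rewrite ?nac ?nbc.
Qed.

Lemma cnt (A : T3) (j : 'I_3) :
  #|[set c | g A c == j]| =
  #|[set x | nx A i0 x == j]| + #|[set x | nx A i1 x == j]| + #|[set x | nx A i2 x == j]|.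
Proof.
transitivity #|[set c : card_t ns3 | nx A (tag c) (tagged c) == j]|.
  by apply: eq_card => c; rewrite !inE ffunE.
by rewrite (card_split (fun j' x => nx A j' x == j)) sum_I3.
Qed.

Lemma bd_g (A : T3) : block_derangement (g A) = (#|A.1.1| == #|A.1.2|) && (#|A.1.2| == #|A.2|).
Proof.
rewrite /block_derangement.
have -> : [forall c : card_t ns3, g A c != tag c].
  apply/forallP => -[j x]; rewrite ffunE /=.
  by case: (I3_cases j) => -> /=; rewrite /nx /=; case: (x \in _).
rewrite andbT forall_I3.
rewrite !cnt /nx /= !card_if /=.
have h1 := max_card A.1.1; have h2 := max_card A.1.2; have h3 := max_card A.2.
rewrite card_ord in h1 h2 h3.
rewrite /ns3.
move: h1 h2 h3; set a1 := #|A.1.1|; set a2 := #|A.1.2|; set a3 := #|A.2| => h1 h2 h3.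
apply/idP/idP.
- move=> /and3P[/eqP e1 /eqP e2 /eqP e3]; apply/andP; split; apply/eqP; lia.
- move=> /andP[/eqP e1 /eqP e2]; apply/and3P; split; apply/eqP; lia.
Qed.


Definition Af (f : {ffun card_t ns3 -> 'I_3}) : T3 :=
  ([set x | f (mk i0 x) == i1], [set x | f (mk i1 x) == i2], [set x | f (mk i2 x) == i0]).

Lemma g_Af (f : {ffun card_t ns3 -> 'I_3}) : [forall c : card_t ns3, f c != tag c] -> g (Af f) = f.
Proof.
move=> /forallP h; apply/ffunP => -[j x]; rewrite ffunE /=.
have hj := h (mk j x); rewrite /= in hj.
have L (y a b c : 'I_3) : y != a -> a != b -> b != c -> c != a ->
    (if y == b then b else c) = y.
  by move=> ya ab bc ca; case: (I3_cases y) a b c ya ab bc ca => -> a b c;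
    case: (I3_cases a) => ->; case: (I3_cases b) => ->; case: (I3_cases c) => ->.
case: (I3_cases j) => ej; subst j; rewrite /nx /= inE; exact: L hj _ _ _.
Qed.

Lemma g_inj : injective g.
Proof.
move=> [[a1 a2] a3] [[b1 b2] b3] e.
have h j x : nx (a1, a2, a3) j x = nx (b1, b2, b3) j x.
  by have := congr1 (fun f : {ffun card_t ns3 -> 'I_3} => f (mk j x)) e; rewrite !ffunE.
have hs (u v : {set 'I_n}) (p q : 'I_3) : p != q ->
    (forall x, (if x \in u then p else q) = (if x \in v then p else q)) -> u = v.
  move=> npq hx; apply/setP => x; have := hx x.
  case: (x \in u); case: (x \in v) => // epq; by rewrite epq eqxx in npq.
congr (_, _, _).
- by apply: (hs _ _ i1 i2) => // x; exact: (h i0 x).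
- by apply: (hs _ _ i2 i0) => // x; exact: (h i1 x).
- by apply: (hs _ _ i0 i1) => // x; exact: (h i2 x).
Qed.

Definition Teq := [set A : T3 | (#|A.1.1| == #|A.1.2|) && (#|A.1.2| == #|A.2|)].

Lemma E3_Teq : E3 n = #|Teq|.
Proof.
rewrite /E3 /E.
have -> : [set f : {ffun card_t (fun _ : 'I_3 => n) -> 'I_3} | block_derangement f] = g @: Teq.
  apply/setP => f; rewrite inE; apply/idP/imsetP.
  - move=> hf; exists (Af f); last by rewrite g_Af //; case/andP: hf.
    by rewrite inE -bd_g g_Af //; case/andP: hf.
  - by case=> A; rewrite inE => hA ->; rewrite bd_g.
by rewrite card_imset //; exact: g_inj.
Qed.


Lemma card_nat (T : finType) (P : pred T) : #|[set x | P x]| = \sum_(x : T) (P x : nat).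
Proof. by rewrite -sum1dep_card big_mkcond; apply: eq_bigr => x _; case: (P x). Qed.

Lemma sum_pick (G : nat -> nat) m : m <= n ->
  \sum_(0 <= k < n.+1) (m == k) * G k = G m.
Proof.
move=> hm.
rewrite (bigD1_seq m) ?mem_index_iota ?iota_uniq //=.
rewrite eqxx mul1n big1 ?addn0 // => k /negbTE; rewrite eq_sym => ->; by rewrite mul0n.
Qed.

Lemma card_Teq : #|Teq| = \sum_(0 <= k < n.+1) 'C(n, k) ^ 3.
Proof.
rewrite /Teq card_nat.
pose F (q : {set 'I_n} * {set 'I_n}) (c : {set 'I_n}) :=
  ((#|q.1| == #|q.2|) && (#|q.2| == #|c|) : nat).
transitivity (\sum_(q : {set 'I_n} * {set 'I_n}) \sum_(c : {set 'I_n}) F q c).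
  by rewrite pair_big.
have hcd k : #|[set c : {set 'I_n} | #|c| == k]| = 'C(n, k) by rewrite card_draws card_ord.
have h1 q : \sum_(c : {set 'I_n}) F q c = (#|q.1| == #|q.2|) * 'C(n, #|q.2|).
  rewrite /F; case: (#|q.1| == #|q.2|); last by rewrite mul0n big1.
  rewrite mul1n -hcd card_nat; apply: eq_bigr => c _; by rewrite eq_sym.
rewrite (eq_bigr _ (fun q _ => h1 q)).
transitivity (\sum_(a : {set 'I_n}) \sum_(b : {set 'I_n}) (#|a| == #|b|) * 'C(n, #|b|)).
  by rewrite pair_big.
have h2 (a : {set 'I_n}) : \sum_(b : {set 'I_n}) (#|a| == #|b|) * 'C(n, #|b|) = 'C(n, #|a|) ^ 2.
  transitivity (\sum_(b : {set 'I_n}) (#|b| == #|a|) * 'C(n, #|a|)).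
    by apply: eq_bigr => b _; case: eqP => [->|]; rewrite ?eqxx // => /nesym /eqP /negbTE ->.
  by rewrite -big_distrl /= -card_nat hcd.
rewrite (eq_bigr _ (fun a _ => h2 a)).
transitivity (\sum_(a : {set 'I_n}) \sum_(0 <= k < n.+1) (#|a| == k) * 'C(n, k) ^ 2).
  apply: eq_bigr => a _; rewrite sum_pick //.
  by have := max_card a; rewrite card_ord.
rewrite exchange_big /=; apply: eq_big_nat => k _.
by rewrite -big_distrl /= -card_nat hcd -expnS.
Qed.

Lemma E3_sum : E3 n = \sum_(0 <= k < n.+1) 'C(n, k) ^ 3.
Proof. by rewrite E3_Teq card_Teq. Qed.

End Comb.

Local Open Scope ring_scope.
Lemma key (F : nat -> nat -> rat) : isrec (S F) -> S F 0 = 1 -> S F 1 = 2 ->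
  forall m, S F m = S Fa m.
Proof.
move=> hr h0 h1; apply: rec_uniq => //; last exact: recA.
- by rewrite h0 (proj1 Fa01).
- by rewrite h1 (proj2 Fa01).
Qed.

Arguments key {F}.

End Dev.
Import Dev.

Theorem mainTheorem6 (n : nat) :
  let e : rat := ((E3 n)%:R)%R in
  [/\ e = ((\sum_(0 <= k < n.+1) 'C(n, k) ^ 3)%N%:R)%R,
      e = ((\sum_(uphalf n <= k < n.+1) 'C(n, k) ^ 2 * 'C(k.*2, n))%N%:R)%R,
      e = ((2%:R ^+ n)^-1 *
          (\sum_(uphalf n <= k < n.+1)
              'C(k.*2, n) * 'C(k.*2, k) * 'C(n.*2 - k.*2, n - k))%N%:R)%R,
      e = (\sum_(0 <= k < n.+1)
            ('C(n + k.*2, 3 * k) * 'C(k.*2, k) * 'C(3 * k, k))%N%:R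
              * (- 4%:R) ^+ (n - k))%R
    & e = ((\sum_(0 <= k < n./2.+1)
            'C(n + k, 3 * k) * 'C(k.*2, k) * 'C(3 * k, k) * 2 ^ (n - k.*2))%N%:R)%R].
Proof.
move=> e.
have he : e = S Fa n by rewrite /e E3_sum Sa.
split.
- by rewrite he Sa.
- by rewrite he sumB (key recB (proj1 Fb01) (proj2 Fb01)).
- by rewrite he sumC (key recC (proj1 Fc01) (proj2 Fc01)).
- by rewrite he sumD (key recD (proj1 Fd01) (proj2 Fd01)).
- by rewrite he sumE (key recE (proj1 Fe01) (proj2 Fe01)).
Qed.
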